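(* Let $L$ be a hyperbolic lattice of rank $m+1$ with a fixed positive cone $\mathcal{P}_L$, and let $f$ be a non-zero vector in the closure $\overline{\mathcal{P}}_L$ with $f^2=0$. Let $\alpha>0$ and let $\mathrm{HS}_\alpha$ be the horosphere $\{x\in\mathcal{P}_L : \langle x,f\rangle^2/x^2=\alpha\}/\mathbb{R}_{>0}$ with base $b=\mathbb{R}_{>0}f$. Put $$c(f,\mathrm{HS}_\alpha):=\sup\Big\{-\frac{\langle v,f\rangle^2}{v^2} \;:\; v\in\mathcal{N}_L,\ \text{there exists } x\in\mathcal{P}_L \text{ with } \langle x,v\rangle=0 \text{ and } \frac{\langle x,f\rangle^2}{x^2}=\alpha\Big\}.$$ Then $c(f,\mathrm{HS}_\alpha)\le\alpha$.
   Context: A hyperbolic lattice is a free $\mathbb{Z}$-module $L$ of finite rank $n>1$ with a non-degenerate symmetric bilinear form $\langle\ ,\ \rangle$ with values in $\mathbb{Z}$ of signature $(1,n-1)$; the form is extended to $L\otimes\mathbb{R}$ and $x^2:=\langle x,x\rangle$. A positive cone $\mathcal{P}_L$ is one of the two connected components of $\{x\in L\otimes\mathbb{R}: x^2>0\}$, and $\overline{\mathcal{P}}_L$ is its closure. $\mathcal{N}_L:=\{v\in L\otimes\mathbb{R}: v^2<0\}$. The hyperbolic space is $\mathcal{H}_L=\mathcal{P}_L/\mathbb{R}_{>0}$, and the horospheres with base the boundary point $b=\mathbb{R}_{>0}f$ are the level sets of the function $x\mapsto\langle x,f\rangle^2/x^2$ on $\mathcal{H}_L$. *)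

(* Defs.v *)
From HB Require Import structures.
From mathcomp Require Import all_boot all_order all_algebra.
From mathcomp Require Import all_classical all_reals all_analysis.
Set Implicit Arguments. Unset Strict Implicit. Unset Printing Implicit Defensive.
Import Order.TTheory GRing.Theory Num.Theory.
Import numFieldNormedType.Exports.
Local Open Scope ring_scope.
Local Open Scope classical_set_scope.

(* A lattice L of rank n is Z^n with an integral Gram matrix G; its real
   extension L (x) R is 'rV[R]_n with the bilinear form below. *)

Definition gramR (R : realType) (n : nat) (G : 'M[int]_n) : 'M[R]_n :=
  map_mx (fun z : int => z%:~R) G.

Definition bform (R : realType) (n : nat) (G : 'M[int]_n) (x y : 'rV[R]_n) : R :=
  (x *m gramR R G *m y^T) 0 0.

Definition qform (R : realType) (n : nat) (G : 'M[int]_n) (x : 'rV[R]_n) : R :=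
  bform G x x.

Definition sig_diag (R : realType) (m : nat) : 'M[R]_m.+1 :=
  diag_mx (\row_(i < m.+1) (if i == ord0 then 1 else -1)).

(* G is a hyperbolic lattice of rank m+1 (m+1 > 1): symmetric, integral,
   non-degenerate, of real signature (1, m) (Sylvester). *)
Definition hyperbolic_lattice (R : realType) (m : nat) (G : 'M[int]_m.+1) : Prop :=
  [/\ (0 < m)%N, G^T = G, \det G != 0 &
      exists P : 'M[R]_m.+1, P \in unitmx /\ P *m gramR R G *m P^T = sig_diag R m].

Definition posset (R : realType) (n : nat) (G : 'M[int]_n) : set 'rV[R]_n :=
  [set x | 0 < qform G x].

Definition positive_cone (R : realType) (n : nat) (G : 'M[int]_n)
    (P : set 'rV[R]_n) : Prop :=
  exists x0, posset G x0 /\ P = connected_component (T := 'rV[R]_n) (posset G) x0.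

Definition negset (R : realType) (n : nat) (G : 'M[int]_n) : set 'rV[R]_n :=
  [set v | qform G v < 0].

(* c(f, HS_alpha) as an extended real (supremum; -oo if the set is empty) *)
Definition c_horo (R : realType) (n : nat) (G : 'M[int]_n) (P : set 'rV[R]_n)
    (f : 'rV[R]_n) (alpha : R) : \bar R :=
  ereal_sup [set (- (bform G v f) ^+ 2 / qform G v)%:E | v in
     [set v | negset G v /\
        exists x, P x /\ bform G x v = 0 /\
                  (bform G x f) ^+ 2 / qform G x = alpha]].

(* Main.v *)
Require Import Defs.
From HB Require Import structures.
From mathcomp Require Import all_boot all_order all_algebra.
From mathcomp Require Import all_classical all_reals all_analysis.
Import Order.TTheory GRing.Theory Num.Theory.
Import numFieldNormedType.Exports.
Local Open Scope ring_scope.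
Local Open Scope classical_set_scope.
From mathcomp Require Import ring lra.
Set Implicit Arguments.
Section S.
Variables (R : realType) (m : nat).
Local Notation V := 'rV[R]_m.+1.
Definition mf (a b : V) : R := (a *m sig_diag R m *m b^T) 0 0.

Lemma mfE a b : mf a b = \sum_i a 0 i * (if i == ord0 then 1 else -1) * b 0 i.
Proof.
rewrite /mf /sig_diag mul_mx_diag !mxE; apply: eq_bigr => i _.
by rewrite !mxE.
Qed.

Lemma mfDl a b c : mf (a + b) c = mf a c + mf b c.
Proof. by rewrite /mf !mulmxDl mxE. Qed.

Lemma mfZl k a c : mf (k *: a) c = k * mf a c.
Proof. by rewrite /mf -!scalemxAl mxE. Qed.

Lemma mfC a b : mf a b = mf b a.
Proof. rewrite !mfE; apply: eq_bigr => i _; ring. Qed.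

Lemma mfDr a b c : mf c (a + b) = mf c a + mf c b.
Proof. by rewrite mfC mfDl !(mfC c). Qed.
Lemma mfZr k a c : mf c (k *: a) = k * mf c a.
Proof. by rewrite mfC mfZl mfC. Qed.

Lemma mf_le a : mf a a <= a 0 0 ^+ 2.
Proof.
rewrite mfE (bigD1 ord0) //= mulr1 -expr2 gerDl.
rewrite sumr_le0 // => i /negPf ->.
by rewrite mulrN1 mulNr oppr_le0 -expr2 sqr_ge0.
Qed.

Lemma rcs x y : 0 < mf x x -> mf x x * mf y y <= mf x y ^+ 2.
Proof.
move=> hx.
have hx0 := mf_le x.
set z := y 0 0 *: x + (- x 0 0) *: y.
have hz := mf_le z.
have z0 : z 0 0 = 0 by rewrite /z !mxE; ring.
rewrite z0 expr0n /= in hz.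
rewrite /z !(mfDl, mfDr, mfZl, mfZr) (mfC y x) in hz.
set qx := mf x x in hx hx0 hz *; set qy := mf y y in hz *; set b := mf x y in hz *.
set x0 := x 0 0 in hx0 hz *; set y0 := y 0 0 in hz *.
have H1 : qx * (y0 ^+ 2 * qx - 2 * y0 * x0 * b + x0 ^+ 2 * qy) <= 0.
  apply: mulr_ge0_le0; [exact: ltW | nra].
have H2 : x0 ^+ 2 * (qx * qy - b ^+ 2) <= 0.
  have : 0 <= (y0 * qx - x0 * b) ^+ 2 by apply: sqr_ge0.
  nra.
have H3 : 0 < x0 ^+ 2 by lra.
rewrite -subr_ge0 -oppr_le0 opprB.
by rewrite -(pmulr_rle0 _ H3).
Qed.
End S.
Arguments mf {R m}.

Lemma key (R : realType) (m : nat) (G : 'M[int]_m.+1) (Pm : 'M[R]_m.+1) :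
  G^T = G -> Pm \in unitmx -> Pm *m gramR R G *m Pm^T = sig_diag R m ->
  forall x y, bform G x y = mf (x *m invmx Pm) (y *m invmx Pm).
Proof.
move=> GT PU PD x y.
have E : gramR R G = invmx Pm *m sig_diag R m *m (invmx Pm)^T.
  rewrite -PD !mulmxA mulVmx // mul1mx -mulmxA -trmx_mul mulVmx // trmx1 mulmx1 //.
rewrite /bform /mf E !trmx_mul !mulmxA //.
Qed.

Lemma fin (R : realType) (a b qx s : R) : 0 < qx -> 0 < s -> qx * b ^+ 2 <= s * a ^+ 2 ->
  - b ^+ 2 / - s <= a ^+ 2 / qx.
Proof.
move=> hq hs h.
rewrite divrNN ler_pdivrMr // mulrAC ler_pdivlMr //; lra.
Qed.


Theorem lemma2p4 (R : realType) (m : nat) (G : 'M[int]_m.+1)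
    (P : set 'rV[R]_m.+1) (f : 'rV[R]_m.+1) (alpha : R) :
  hyperbolic_lattice R G ->
  positive_cone G P ->
  f != 0 -> closure (T := 'rV[R]_m.+1) P f -> qform G f = 0 ->
  0 < alpha ->
  (c_horo G P f alpha <= alpha%:E)%E.
Proof.
move=> [_ GT _ [Pm [PU PD]]] [x0 [_ HP]] _ _ hf _.
apply: ge_ereal_sup => _ [v [hv [x [Px [hxv hxf]]]]] <-.
rewrite lee_fin.
have hx : 0 < qform G x.
  by move: Px; rewrite HP => /connected_component_sub.
move: hv hx hf hxv hxf; rewrite /negset /= /qform !(key GT PU PD).
set x' := x *m _; set v' := v *m _; set f' := f *m _.
move=> hv hx hf hxv <-.
rewrite -[X in _ / X <= _]opprK.
apply: fin => //; first lra.
have := rcs R x' (mf v' f' *: v' + (- mf v' v') *: f') hx.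
rewrite !(mfDl, mfDr, mfZl, mfZr) hxv hf (mfC R f' v').
move=> h.
have hs : 0 < - mf v' v' by lra.
rewrite -(@ler_pM2l _ (- mf v' v')) //.
nra.
Qed.
 About mf_le.
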